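(* Let $(X,e,\mu)$ be an $\mathrm{NP}_2$-digital H-space. Then $X_e$, the connected component of $X$ containing $e$, is $\mathrm{NP}_2$-contractible.
   Context: A digital image is a finite set $X\subset\mathbb{Z}^n$ with a reflexive symmetric adjacency relation (a finite reflexive graph); continuous maps send adjacent points to adjacent points. On products, $\mathrm{NP}_2$ declares two tuples adjacent iff coordinates are adjacent in at most 2 positions and equal elsewhere. An $\mathrm{NP}_2$-homotopy from $f$ to $g:X\to Y$ is an $\mathrm{NP}_2$-continuous $H:X\times[0,m]_{\mathbb{Z}}\to Y$ with $H(\cdot,0)=f$, $H(\cdot,m)=g$; write $f\simeq_2 g$. A digital image is $\mathrm{NP}_2$-contractible if it is $\mathrm{NP}_2$-homotopy equivalent to a single point (equivalently its identity is $\mathrm{NP}_2$-homotopic to a constant map). $(f,g)(x)=(f(x),g(x))$; $c_e$ is constant at $e$. An $\mathrm{NP}_2$-digital H-space is $(X,e,\mu)$ with $\mu:X\times X\to X$ $\mathrm{NP}_2$-continuous, $\mu\circ(\mathrm{id}_X,c_e)\simeq_2\mathrm{id}_X$, $\mu\circ(c_e,\mathrm{id}_X)\simeq_2\mathrm{id}_X$ (homotopies need not be pointed). *)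

(* Defs.v *)
From mathcomp Require Import all_boot.
Set Implicit Arguments. Unset Strict Implicit. Unset Printing Implicit Defensive.

(* A digital image is modelled as a finite type X with an adjacency relation
   (assumed reflexive and symmetric where used): a finite reflexive graph. *)

Definition dcontinuous (X Y : Type) (adjX : rel X) (adjY : rel Y) (f : X -> Y) :=
  forall x x', adjX x x' -> adjY (f x) (f x').

(* NP_2 adjacency on a product of TWO factors: coordinates adjacent in at most
   2 positions and equal elsewhere; with two factors (and reflexive adjacency)
   this is: both coordinates adjacent (equal counts as adjacent). *)
Definition np2 (X Y : Type) (adjX : rel X) (adjY : rel Y) : rel (X * Y) :=
  fun p q => adjX p.1 q.1 && adjY p.2 q.2.

(* c_1-adjacency on the digital interval [0,m]_Z (as naturals) *)
Definition iadj : rel nat := fun i j => (i <= j.+1) && (j <= i.+1).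

Definition np2_homotopic (X Y : Type) (adjX : rel X) (adjY : rel Y) (f g : X -> Y) :=
  exists (m : nat) (H : X -> nat -> Y),
    [/\ forall x, H x 0 = f x,
        forall x, H x m = g x &
        forall x x' t t', t <= m -> t' <= m ->
          np2 adjX iadj (x, t) (x', t') -> adjY (H x t) (H x' t')].

Definition np2_homotopy_equivalent (X Y : Type) (adjX : rel X) (adjY : rel Y) :=
  exists (f : X -> Y) (g : Y -> X),
    [/\ dcontinuous adjX adjY f, dcontinuous adjY adjX g,
        np2_homotopic adjX adjX (g \o f) id &
        np2_homotopic adjY adjY (f \o g) id].

Definition point_adj : rel unit := fun _ _ => true.

Definition np2_contractible (X : Type) (adjX : rel X) :=
  np2_homotopy_equivalent adjX point_adj.

Definition np2_Hspace (X : Type) (adjX : rel X) (e : X) (mu : X * X -> X) :=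
  [/\ dcontinuous (np2 adjX adjX) adjX mu,
      np2_homotopic adjX adjX (fun x => mu (x, e)) id &
      np2_homotopic adjX adjX (fun x => mu (e, x)) id].

Definition component (X : finType) (adjX : rel X) (e : X) :=
  {x : X | connect adjX e x}.

Definition component_adj (X : finType) (adjX : rel X) (e : X)
  : rel (component adjX e) := fun a b => adjX (val a) (val b).

(* Main.v *)
Require Import Defs.
From mathcomp Require Import all_boot.
From mathcomp Require Import zify.
From Stdlib Require Import Classical.

Set Implicit Arguments. Unset Strict Implicit. Unset Printing Implicit Defensive.

Definition xadjP (X : finType) (adj : rel X) (e : X) (f g : X -> X) :=
  forall x x', connect adj e x -> connect adj e x' -> adj x x' -> adj (f x) (g x').
Definition presP (X : finType) (adj : rel X) (e : X) (f : X -> X) :=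
  forall x, connect adj e x -> connect adj e (f x).

Inductive hr (X : finType) (adj : rel X) (e : X) : (X -> X) -> Prop :=
  | hr_id : hr adj e id
  | hr_step (g h : X -> X) : hr adj e g -> xadjP adj e h g -> xadjP adj e h h ->
      presP adj e h -> hr adj e h.

Lemma conn_step (X : finType) (adj : rel X) (e a b : X) :
  connect adj e a -> adj a b -> connect adj e b.
Proof. by move=> Ha Hab; apply: connect_trans Ha (connect1 Hab). Qed.

Lemma hom_P (X : finType) (adj : rel X) (adj_refl : reflexive adj)
  (adj_sym : symmetric adj) (e : X) (f0 : X -> X) :
  np2_homotopic adj adj f0 id ->
  exists m (H : X -> nat -> X),
    [/\ forall x, H x 0 = f0 x, forall x, H x m = x,
        forall x t, t <= m -> connect adj e x -> connect adj e (H x t) &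
        forall x x' t, t < m -> adj x x' -> adj (H x t) (H x' t.+1)].
Proof.
move=> [m [H [H0 Hm Ha]]]; exists m, H; split => //; last first.
  move=> x x' t lt axx'; apply: Ha => //; first exact: ltnW.
  by rewrite /np2 /= axx' /iadj /=; apply/andP; split; lia.
suff S : forall k x, k <= m -> connect adj e x -> connect adj e (H x (m - k)).
  move=> x t le Px; have := S (m - t) x (leq_subr _ _) Px.
  by rewrite subKn.
elim=> [|k IH] x le Px; first by rewrite subn0 Hm.
have := IH x (ltnW le) Px => C.
apply: (conn_step C); rewrite adj_sym.
have -> : m - k = (m - k.+1).+1 by lia.
apply: Ha; [lia|lia|].
by rewrite /np2 /= adj_refl /iadj /=; apply/andP; split; lia.
Qed.


Lemma core (X : finType) (adj : rel X) (adj_refl : reflexive adj)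
  (adj_sym : symmetric adj) (e : X) (mu : X * X -> X) :
  np2_Hspace adj e mu ->
  forall n (g : X -> X), hr adj e g -> presP adj e g -> xadjP adj e g g ->
    (forall x, connect adj e x -> g (g x) = g x) ->
    #|[set y | connect adj e y && (g y == y)]| <= n ->
    exists c, connect adj e c /\ hr adj e (fun _ => c).
Proof.
move=> [Hmu HH1 HH2].
have closeP : forall a b, connect adj e a -> adj a b -> connect adj e b.
  by move=> a b; apply: conn_step.
have [m1 [H1 [H10 H1m H1P H1a]]] := hom_P adj_refl adj_sym e HH1.
have [m2 [H2 [H20 H2m H2P H2a]]] := hom_P adj_refl adj_sym e HH2.
have Pe : connect adj e e by apply: connect0.
have Pmu : forall a b, connect adj e a -> connect adj e b -> connect adj e (mu (a, b)).
  move=> a b Pa /connectP [p pth ->].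
  have : connect adj e (mu (a, e)) by have := H1P a 0 (leq0n _) Pa; rewrite H10.
  suff gen : forall p x, connect adj e x -> path adj x p ->
      connect adj e (mu (a, x)) -> connect adj e (mu (a, last x p)).
    by apply: gen.
  elim=> [|y q IH] x //= Px /andP [axy pth2] Pmx.
  apply: IH => //; first exact: (closeP _ _ Px axy).
  by apply: (closeP _ _ Pmx); apply: Hmu; rewrite /np2 /= adj_refl axy.
have step : forall g : X -> X, hr adj e g -> presP adj e g -> xadjP adj e g g ->
    (forall x, connect adj e x -> g (g x) = g x) ->
    (exists c, connect adj e c /\ hr adj e (fun _ => c)) \/
    exists g' : X -> X, [/\ hr adj e g', presP adj e g', xadjP adj e g' g',
      (forall x, connect adj e x -> g' (g' x) = g' x) &
      #|[set y | connect adj e y && (g' y == y)]| < #|[set y | connect adj e y && (g y == y)]|].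
  move=> g hrg presg selfg idg.
  pose inS y := connect adj e y && (g y == y).
  have inSg : forall x, connect adj e x -> inS (g x).
    by move=> x Px; rewrite /inS presg //= idg.
  case: (classic (exists u v, [/\ inS u, inS v, u <> v &
            forall w, inS w -> adj u w -> adj v w])) => [[u [v [Su Sv nuv fold]]]|nofold].
    right.
    have [Pu /eqP gu] := andP Su; have [Pv /eqP gv] := andP Sv.
    pose g' x := if g x == u then v else g x.
    have foldg : forall x', connect adj e x' -> adj u (g x') -> adj v (g x').
      by move=> x' Px' a; apply: fold => //; apply: inSg.
    have xg : xadjP adj e g' g.
      move=> x x' Px Px' axx'; rewrite /g'.
      case: eqP => [gxu|_]; last exact: selfg.
      by apply: foldg => //; rewrite -gxu; apply: selfg.
    have presg' : presP adj e g'.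
      by move=> x Px; rewrite /g'; case: eqP => _ //; apply: presg.
    have idg' : forall x, connect adj e x -> g' (g' x) = g' x.
      move=> x Px; rewrite /g'; case: (g x =P u) => [gxu|ngxu].
        by rewrite gv; case: eqP => // vu; case: nuv.
      by rewrite idg //; case: eqP.
    exists g'; split => //.
    - apply: (hr_step hrg xg) => //.
      move=> x x' Px Px' axx'; rewrite {2}/g'.
      case: (g x' =P u) => [gxu|_]; last exact: xg.
      rewrite /g'; case: (g x =P u) => [_|_]; first exact: adj_refl.
      rewrite adj_sym; apply: foldg => //; rewrite -gxu; apply: selfg => //.
      by rewrite adj_sym.
    - move=> x x' Px Px' axx'; rewrite {2}/g'.
      case: (g x' =P u) => [gxu|_]; last exact: xg.
      rewrite /g'; case: (g x =P u) => [_|_]; first exact: adj_refl.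
      rewrite adj_sym; apply: foldg => //; rewrite -gxu; apply: selfg => //.
      by rewrite adj_sym.
    - apply: (@leq_trans #|[set y | connect adj e y && (g y == y)] :\ u|.+1).
        rewrite ltnS; apply: subset_leq_card; apply/subsetP => y.
        rewrite !inE => /andP [Py /eqP gy']; rewrite Py /=.
        move: gy'; rewrite /g'; case: (g y =P u) => [gyu vy|ngyu gyy].
          by move: gyu; rewrite -vy gv => vu; case: nuv.
        rewrite gyy eqxx andbT; apply/eqP => yu; apply: ngyu; by rewrite gyy.
      by rewrite [in X in _ <= X](cardsD1 u) inE Pu gu eqxx.
  left.
  have NoFold : forall u v, inS u -> inS v ->
      (forall w, inS w -> adj u w -> adj v w) -> u = v.
    move=> u v Su Sv f; case: (u =P v) => // nuv; exfalso; apply: nofold.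
    by exists u, v; split.
  have fixL : forall psi : X -> X, (forall u, inS u -> inS (psi u)) ->
      (forall u w, inS u -> inS w -> adj u w -> adj (psi u) w) ->
      forall u, inS u -> psi u = u.
    move=> psi Spsi Apsi u Su; symmetry; apply: NoFold => //; first exact: Spsi.
    by move=> w Sw a; apply: Apsi.
  have hom : forall (H : X -> nat -> X) m, (forall x, H x m = x) ->
      (forall x t, t <= m -> connect adj e x -> connect adj e (H x t)) ->
      (forall x x' t, t < m -> adj x x' -> adj (H x t) (H x' t.+1)) ->
      forall u, inS u -> g (H u 0) = u.
    move=> H m Hm HP Ha.
    suff S : forall k, k <= m -> forall u, inS u -> g (H u (m - k)) = u.
      by move=> u Su; have := S m (leqnn _) u Su; rewrite subnn.
    elim=> [|k IH] le.
      by move=> u /andP [Pu /eqP gu]; rewrite subn0 Hm.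
    apply: fixL.
      by move=> u /andP [Pu _]; apply: inSg; apply: HP => //; lia.
    move=> u w Su Sw auw.
    have [Pu _] := andP Su; have [Pw _] := andP Sw.
    rewrite -[X in adj _ X](IH (ltnW le) w Sw).
    have -> : m - k = (m - k.+1).+1 by lia.
    apply: selfg; try (apply: HP => //; lia).
    by apply: Ha => //; lia.
  have prop : forall k : X -> X -> X,
      (forall u w y y', adj u w -> adj y y' -> adj (k u y) (k w y')) ->
      (forall u y, connect adj e u -> connect adj e y -> connect adj e (k u y)) ->
      (forall u, inS u -> g (k u e) = u) ->
      forall y, connect adj e y -> forall u, inS u -> g (k u y) = u.
    move=> k kc kP k0 y /connectP [p pth ->].
    suff gen : forall q x, connect adj e x -> path adj x q ->
        (forall u, inS u -> g (k u x) = u) ->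
        forall u, inS u -> g (k u (last x q)) = u.
      by apply: gen.
    elim=> [|z q IH] x //= Px /andP [axz pth2] Hx.
    have Pz := closeP _ _ Px axz.
    apply: IH => //; apply: fixL.
      by move=> u /andP [Pu _]; apply: inSg; apply: kP.
    move=> u w Su Sw auw.
    have [Pu _] := andP Su; have [Pw _] := andP Sw.
    rewrite -[X in adj _ X](Hx w Sw); apply: selfg; try (apply: kP => //).
    by apply: kc => //; rewrite adj_sym.
  have A : forall y, connect adj e y -> forall u, inS u -> g (mu (u, y)) = u.
    apply: prop.
    - by move=> u w y y' a b; apply: Hmu; rewrite /np2 /= a b.
    - by move=> u y; apply: Pmu.
    - by move=> u Su; rewrite -H10; apply: (hom H1 m1).
  have B : forall y, connect adj e y -> forall u, inS u -> g (mu (y, u)) = u.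
    apply: (prop (fun u y => mu (y, u))).
    - by move=> u w y y' a b; apply: Hmu; rewrite /np2 /= a b.
    - by move=> u y Pu Py; apply: Pmu.
    - by move=> u Su; rewrite -H20; apply: (hom H2 m2).
  have all_eq : forall u w, inS u -> inS w -> u = w.
    move=> u w Su Sw; have [Pu _] := andP Su; have [Pw _] := andP Sw.
    by rewrite -(A w Pw u Su) (B u Pu w Sw).
  exists (g e); split; first exact: (presg e Pe).
  apply: (hr_step hrg) => //.
  + move=> x x' Px Px' axx'; rewrite (all_eq (g x') (g e)); try (apply: inSg => //).
    exact: adj_refl.
  + by move=> x _; apply: (presg e Pe).
move=> n; elim: n => [|n IH] g hrg presg selfg idg card.
  by case: (step g hrg presg selfg idg) => // [[g' [_ _ _ _]]]; lia.
case: (step g hrg presg selfg idg) => // [[g' [h1 h2 h3 h4 h5]]].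
by apply: (IH g') => //; lia.
Qed.

Lemma hr_chain (X : finType) (adj : rel X) (e : X) (h : X -> X) :
  hr adj e h -> exists m (F : nat -> X -> X),
    [/\ F 0 = h, F m = id, forall t, presP adj e (F t),
        forall t, xadjP adj e (F t) (F t) & forall t, xadjP adj e (F t) (F t.+1)].
Proof.
elim=> [|g h' _ [m [F [F0 Fm Fp Fs Fn]]] xhg xhh ph].
  exists 0, (fun _ => id); split => //.
  - by move=> t x.
  - by move=> t x x' _ _.
  - by move=> t x x' _ _.
exists m.+1, (fun t => if t is s.+1 then F s else h'); split => //.
- by case.
- by case.
- by case=> [|t] //=; rewrite F0.
Qed.

Theorem mainTheorem12 (X : finType) (adj : rel X)
  (adj_refl : reflexive adj) (adj_sym : symmetric adj)
  (e : X) (mu : X * X -> X) :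
  np2_Hspace adj e mu ->
  np2_contractible (@component_adj X adj e).
Proof.
move=> HS.
have [c [Pc hrc]] := core adj_refl adj_sym HS (n := #|[set y | connect adj e y && (id y == y)]|)
  (@hr_id X adj e) (fun x Px => Px) (fun x x' _ _ a => a) (fun x _ => erefl) (leqnn _).
have [m [F [F0 Fm Fp Fs Fn]]] := hr_chain hrc.
pose cC : component adj e := exist _ c Pc.
exists (fun _ => tt), (fun _ => cC); split.
- by [].
- by move=> _ _ _; rewrite /component_adj /= adj_refl.
- exists m, (fun x t => exist (fun y => connect adj e y) (F t (val x)) (Fp t (val x) (valP x))).
  split.
  + by move=> x; apply: val_inj; rewrite /= F0.
  + by move=> x; apply: val_inj; rewrite /= Fm.
  + move=> x x' t t' _ _ /andP [/= axx' /andP [a b]].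
    rewrite /component_adj /=.
    have Px := valP x; have Px' := valP x'.
    have : t = t' \/ t' = t.+1 \/ t = t'.+1 by lia.
    case=> [->|[->|->]]; first exact: Fs.
      exact: Fn.
    rewrite adj_sym; apply: Fn => //; by rewrite adj_sym.
- exists 0, (fun x _ => x); split => //; by case.
Qed.
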